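(* The real form $$O'_{(4,1)}(x,y,z,w)=w^8+x^4y^2z^2+y^4x^2z^2+z^4x^2y^2-4x^2y^2z^2w^2$$ is an extremal element of $\mathcal P_{4,8}$.
   Context: $\mathcal P_{n,m}$ denotes the convex cone of all positive semidefinite real forms in $n$ variables of degree $m$. A form $F\in\mathcal P_{n,m}$ is extremal if $F=F_1+F_2$ with $F_1,F_2\in\mathcal P_{n,m}$ implies $F_i=\lambda_iF$ for some nonnegative reals $\lambda_i$. *)

(* Defs.v *)
From HB Require Import structures.
From mathcomp Require Import all_boot all_order all_algebra.
From mathcomp Require Import reals.
From mathcomp Require Import mpoly.
Set Implicit Arguments. Unset Strict Implicit. Unset Printing Implicit Defensive.
Import Order.TTheory GRing.Theory Num.Theory.
Local Open Scope ring_scope.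

Definition is_form (R : realType) (n m : nat) (F : {mpoly R[n]}) : Prop :=
  F \is m.-homog.

Definition is_psd (R : realType) (n : nat) (F : {mpoly R[n]}) : Prop :=
  forall x : 'I_n -> R, 0 <= F.@[x].

Definition in_P (R : realType) (n m : nat) (F : {mpoly R[n]}) : Prop :=
  is_form m F /\ is_psd F.

Definition extremal (R : realType) (n m : nat) (F : {mpoly R[n]}) : Prop :=
  in_P m F /\
  forall F1 F2 : {mpoly R[n]}, in_P m F1 -> in_P m F2 -> F = F1 + F2 ->
    exists l1 l2 : R, [/\ 0 <= l1, 0 <= l2, F1 = l1 *: F & F2 = l2 *: F].

Definition O41 (R : realType) : {mpoly R[4]} :=
  let x := 'X_(0 : 'I_4) in let y := 'X_(1 : 'I_4) in
  let z := 'X_(2 : 'I_4) in let w := 'X_(3 : 'I_4) in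
  w ^+ 8 + x ^+ 4 * y ^+ 2 * z ^+ 2 + y ^+ 4 * x ^+ 2 * z ^+ 2
  + z ^+ 4 * x ^+ 2 * y ^+ 2 - 4%:R * x ^+ 2 * y ^+ 2 * z ^+ 2 * w ^+ 2.

(* Main.v *)
Require Import Defs.
From mathcomp Require Import all_boot all_order all_algebra.
From mathcomp Require Import reals.
From mathcomp Require Import mpoly.
From mathcomp Require Import polyrcf.
From mathcomp Require Import ring lra zify.
Set Implicit Arguments. Unset Strict Implicit. Unset Printing Implicit Defensive.
Import Order.TTheory GRing.Theory Num.Theory.
Local Open Scope ring_scope.
Notation i0 := (0%R : 'I_4).
Notation i1 := (1%R : 'I_4).
Notation i2 := (2%R : 'I_4).
Notation i3 := (3%R : 'I_4).

Lemma seq_argmax (T : eqType) (s : seq T) (f : T -> nat) x :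
  x \in s -> exists2 y, y \in s & forall z, z \in s -> (f z <= f y)%N.
Proof.
elim: s x => [//|a s IH] x; rewrite inE => /orP [/eqP _|xs].
  case: s IH => [|b s'] IH.
    by exists a; rewrite ?inE // => z; rewrite inE => /eqP ->.
  have [y ys Hy] := IH b (mem_head _ _).
  case: (leqP (f a) (f y)) => h.
    exists y; first by rewrite inE ys orbT.
    by move=> z; rewrite inE => /orP [/eqP ->|/Hy].
  exists a; first exact: mem_head.
  move=> z; rewrite inE => /orP [/eqP ->//|/Hy hz]; lia.
have [y ys Hy] := IH x xs.
case: (leqP (f a) (f y)) => h.
  exists y; first by rewrite inE ys orbT.
  by move=> z; rewrite inE => /orP [/eqP ->|/Hy].
exists a; first exact: mem_head.
move=> z; rewrite inE => /orP [/eqP ->//|/Hy hz]; lia.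
Qed.

Section NP.
Variables (R : realType) (n : nat).

Definition ew (lam : 'I_n -> nat) (m : 'X_{1..n}) : nat := (\sum_i lam i * m i)%N.

Definition upoly lam (G : {mpoly R[n]}) : {poly R} :=
  \sum_(m <- msupp G) G@_m *: 'X^(ew lam m).

Lemma upoly_horner lam G t :
  (upoly lam G).[t] = G.@[fun i => t ^+ lam i].
Proof.
rewrite mevalE /upoly horner_sum; apply: eq_bigr => m _.
rewrite hornerZ hornerXn; congr (_ * _).
rewrite /ew -prodrXr; apply: eq_bigr => i _; by rewrite exprM.
Qed.

Lemma coef_upoly lam G k :
  (upoly lam G)`_k = \sum_(m <- msupp G) G@_m * (ew lam m == k)%:R.
Proof.
rewrite /upoly coef_sum; apply: eq_bigr => m _; by rewrite coefZ coefXn eq_sym.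
Qed.

Lemma poly_top_pos (q : {poly R}) E :
  0 < q`_E -> (forall k, (E < k)%N -> q`_k = 0) ->
  exists N : R, forall x, N <= x -> q`_E <= q.[x].
Proof.
move=> hE hk.
have sq : size q = E.+1.
  apply/eqP; rewrite eqn_leq; apply/andP; split.
    apply/leq_sizeP => j hj; exact: hk.
  rewrite ltnNge; apply/negP => /leq_sizeP /(_ E (leqnn _)) h0.
  by rewrite h0 ltxx in hE.
have hl : lead_coef q = q`_E by rewrite lead_coefE sq.
rewrite -hl; apply: poly_pinfty_gt_lc; by rewrite hl.
Qed.

Lemma NP lam (G F : {mpoly R[n]}) :
  (forall t : R, 0 <= t -> 0 <= G.@[fun i => t ^+ lam i] /\
          G.@[fun i => t ^+ lam i] <= F.@[fun i => t ^+ lam i]) ->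
  {in msupp G &, injective (ew lam)} ->
  forall m, m \in msupp G -> exists2 m', m' \in msupp F & (ew lam m <= ew lam m')%N.
Proof.
move=> H inj m hm.
case: (boolP (has (fun m' => ew lam m <= ew lam m')%N (msupp F))).
  by move/hasP => [m' h1 h2]; exists m'.
move/hasPn => hF; exfalso.
have [ms msin msmax] := seq_argmax (ew lam) hm.
set E := ew lam ms.
have hFE : forall m', m' \in msupp F -> (ew lam m' < E)%N.
  move=> m' /hF; rewrite -ltnNge => h; have := msmax _ hm; rewrite /E; lia.
have cG : (upoly lam G)`_E = G@_ms.
  rewrite coef_upoly (bigD1_seq ms) ?msupp_uniq //= eqxx mulr1.
  rewrite big_seq_cond big1 ?addr0 // => m' /andP [hm' hne].
  case: eqP => [he|]; last by rewrite mulr0.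
  exfalso; move/negP: hne; apply; apply/eqP; exact: inj.
have cGk : forall k, (E < k)%N -> (upoly lam G)`_k = 0.
  move=> k hk; rewrite coef_upoly big_seq big1 // => m' hm'.
  case: eqP => [he|]; last by rewrite mulr0.
  have := msmax _ hm'; rewrite he /E; lia.
have cFk : forall k, (E <= k)%N -> (upoly lam F)`_k = 0.
  move=> k hk; rewrite coef_upoly big_seq big1 // => m' hm'.
  case: eqP => [he|]; last by rewrite mulr0.
  have := hFE _ hm'; rewrite he; lia.
have nz : G@_ms != 0 by rewrite -mcoeff_msupp.
have [hc|hc|hc] := ltgtP (G@_ms) 0; last first.
  by rewrite hc eqxx in nz.
- have h1 : 0 < (upoly lam G - upoly lam F)`_E by rewrite coefB cG cFk // subr0.
  have h2 : forall k, (E < k)%N -> (upoly lam G - upoly lam F)`_k = 0.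
    by move=> k hk; rewrite coefB cGk // cFk ?subr0 // ltnW.
  have [N HN] := poly_top_pos h1 h2.
  have hN1 : N <= Num.max N 0 by rewrite le_max lexx.
  have hN2 : 0 <= Num.max N 0 by rewrite le_max lexx orbT.
  have := HN (Num.max N 0) hN1.
  rewrite hornerD hornerN !upoly_horner coefB cG cFk // subr0.
  have [_ h3] := H (Num.max N 0) hN2.
  move=> h4; lra.
- have h1 : 0 < (- upoly lam G)`_E by rewrite coefN cG oppr_gt0.
  have h2 : forall k, (E < k)%N -> (- upoly lam G)`_k = 0.
    by move=> k hk; rewrite coefN cGk // oppr0.
  have [N HN] := poly_top_pos h1 h2.
  have hN1 : N <= Num.max N 0 by rewrite le_max lexx.
  have hN2 : 0 <= Num.max N 0 by rewrite le_max lexx orbT.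
  have := HN (Num.max N 0) hN1.
  rewrite hornerN upoly_horner coefN cG.
  have [h3 _] := H (Num.max N 0) hN2.
  move=> h4; lra.
Qed.

End NP.


Section Fin.
Variable R : realType.

Definition hornr (bs : seq R) (t : R) := foldr (fun b acc => b + t * acc) 0 bs.
Definition sumabs (bs : seq R) := foldr (fun b acc => `|b| + acc) 0 bs.

Lemma hornr_bound bs t : `|t| <= 1 -> `|hornr bs t| <= sumabs bs.
Proof.
move=> ht; elim: bs => [|b bs IH] /=; first by rewrite normr0.
apply: (le_trans (ler_normD _ _)); apply: lerD => //.
rewrite normrM; have h0 := normr_ge0 (hornr bs t).
have h1 := normr_ge0 t. nra.
Qed.

Lemma fo (a0 a1 : R) (bs : seq R) :
  (forall t, 0 <= a0 + a1 * t + t ^+ 2 * hornr bs t) -> a0 = 0 -> a1 = 0.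
Proof.
move=> H h0; subst a0.
have K0 : 0 <= sumabs bs by elim: bs {H} => //= b bs IH; rewrite addr_ge0.
set D := `|a1| + sumabs bs + 1.
have D0 : 0 < D by rewrite /D; have := normr_ge0 a1 => ?; lra.
set t := - a1 / D.
have tD : t * D = - a1 by rewrite /t mulrC mulrCA mulfV ?gt_eqF // mulr1.
have ht : `|t| <= 1.
  rewrite /t normrM normrN normfV (gtr0_norm D0) ler_pdivrMr // mul1r /D.
  lra.
have hb := hornr_bound bs ht.
have hh : hornr bs t <= sumabs bs by apply: le_trans (ler_norm _) hb.
have := H t; rewrite add0r => h.
have h2 : 0 <= (a1 * t + t ^+ 2 * hornr bs t) * D ^+ 2 by rewrite mulr_ge0 // exprn_ge0 // ltW.
have e : (a1 * t + t ^+ 2 * hornr bs t) * D ^+ 2 = a1 ^+ 2 * (hornr bs t - D).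
  have -> : (a1 * t + t ^+ 2 * hornr bs t) * D ^+ 2 = a1 * (t * D) * D + (t * D) ^+ 2 * hornr bs t by ring.
  rewrite tD; ring.
rewrite e in h2.
have hn : hornr bs t - D < 0 by rewrite /D; have := normr_ge0 a1 => ?; lra.
have : a1 ^+ 2 <= 0.
  nra.
move=> ha; apply/eqP; rewrite -sqrf_eq0 eq_le ha sqr_ge0 //.
Qed.
Definition P (g0 g1 g2 g3 g4 g5 g6 g7 g8 g9 g10 g11 g12 g13 g14 a b c d : R) : R :=
  g0 * (a ^+ 0 * b ^+ 0 * c ^+ 0 * d ^+ 8) + g1 * (a ^+ 1 * b ^+ 1 * c ^+ 1 * d ^+ 5) + g2 * (a ^+ 1 * b ^+ 1 * c ^+ 2 * d ^+ 4) + g3 * (a ^+ 1 * b ^+ 2 * c ^+ 1 * d ^+ 4) + g4 * (a ^+ 2 * b ^+ 1 * c ^+ 1 * d ^+ 4) + g5 * (a ^+ 2 * b ^+ 2 * c ^+ 2 * d ^+ 2) + g6 * (a ^+ 2 * b ^+ 2 * c ^+ 3 * d ^+ 1) + g7 * (a ^+ 2 * b ^+ 2 * c ^+ 4 * d ^+ 0) + g8 * (a ^+ 2 * b ^+ 3 * c ^+ 2 * d ^+ 1) + g9 * (a ^+ 2 * b ^+ 3 * c ^+ 3 * d ^+ 0) + g10 * (a ^+ 2 * b ^+ 4 * c ^+ 2 * d ^+ 0) + g11 * (a ^+ 3 * b ^+ 2 * c ^+ 2 * d ^+ 1) + g12 * (a ^+ 3 * b ^+ 2 * c ^+ 3 *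 d ^+ 0) + g13 * (a ^+ 3 * b ^+ 3 * c ^+ 2 * d ^+ 0) + g14 * (a ^+ 4 * b ^+ 2 * c ^+ 2 * d ^+ 0).
Definition Fv (a b c d : R) : R := d ^+ 8 + a ^+ 4 * b ^+ 2 * c ^+ 2 + b ^+ 4 * a ^+ 2 * c ^+ 2 + c ^+ 4 * a ^+ 2 * b ^+ 2 - 4%:R * a ^+ 2 * b ^+ 2 * c ^+ 2 * d ^+ 2.
Lemma final (g0 g1 g2 g3 g4 g5 g6 g7 g8 g9 g10 g11 g12 g13 g14 : R) :
  (forall a b c d : R, 0 <= P g0 g1 g2 g3 g4 g5 g6 g7 g8 g9 g10 g11 g12 g13 g14 a b c d /\ P g0 g1 g2 g3 g4 g5 g6 g7 g8 g9 g10 g11 g12 g13 g14 a b c d <= Fv a b c d) ->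
  g1 = 0 /\ g2 = 0 /\ g3 = 0 /\ g4 = 0 /\ g5 = - 4%:R * g0 /\ g6 = 0 /\ g7 = 1%:R * g0 /\ g8 = 0 /\ g9 = 0 /\ g10 = 1%:R * g0 /\ g11 = 0 /\ g12 = 0 /\ g13 = 0 /\ g14 = 1%:R * g0.
Proof.
move=> H.
have v0 : (1%:R) * g0 + (1%:R) * g1 + (1%:R) * g2 + (1%:R) * g3 + (1%:R) * g4 + (1%:R) * g5 + (1%:R) * g6 + (1%:R) * g7 + (1%:R) * g8 + (1%:R) * g9 + (1%:R) * g10 + (1%:R) * g11 + (1%:R) * g12 + (1%:R) * g13 + (1%:R) * g14 = 0.
  have [h1 h2] := H (1%:R) (1%:R) (1%:R) (1%:R).
  have e : P g0 g1 g2 g3 g4 g5 g6 g7 g8 g9 g10 g11 g12 g13 g14 (1%:R) (1%:R) (1%:R) (1%:R) = (1%:R) * g0 + (1%:R) * g1 + (1%:R) * g2 + (1%:R) * g3 + (1%:R) * g4 + (1%:R) * g5 + (1%:R) * g6 + (1%:R) * g7 + (1%:R) * g8 + (1%:R) * g9 + (1%:R) * g10 + (1%:R) * g11 + (1%:R) * g12 + (1%:R) * g13 + (1%:R) * g14 by rewrite /P; ring.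
  have ef : Fv (1%:R) (1%:R) (1%:R) (1%:R) = 0 by rewrite /Fv; ring.
  lra.
have v1 : (1%:R) * g0 + (- 1%:R) * g1 + (1%:R) * g2 + (- 1%:R) * g3 + (- 1%:R) * g4 + (1%:R) * g5 + (- 1%:R) * g6 + (1%:R) * g7 + (1%:R) * g8 + (- 1%:R) * g9 + (1%:R) * g10 + (1%:R) * g11 + (- 1%:R) * g12 + (1%:R) * g13 + (1%:R) * g14 = 0.
  have [h1 h2] := H (1%:R) (1%:R) (- 1%:R) (1%:R).
  have e : P g0 g1 g2 g3 g4 g5 g6 g7 g8 g9 g10 g11 g12 g13 g14 (1%:R) (1%:R) (- 1%:R) (1%:R) = (1%:R) * g0 + (- 1%:R) * g1 + (1%:R) * g2 + (- 1%:R) * g3 + (- 1%:R) * g4 + (1%:R) * g5 + (- 1%:R) * g6 + (1%:R) * g7 + (1%:R) * g8 + (- 1%:R) * g9 + (1%:R) * g10 + (1%:R) * g11 + (- 1%:R) * g12 + (1%:R) * g13 + (1%:R) * g14 by rewrite /P; ring.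
  have ef : Fv (1%:R) (1%:R) (- 1%:R) (1%:R) = 0 by rewrite /Fv; ring.
  lra.
have v2 : (1%:R) * g0 + (- 1%:R) * g1 + (- 1%:R) * g2 + (1%:R) * g3 + (- 1%:R) * g4 + (1%:R) * g5 + (1%:R) * g6 + (1%:R) * g7 + (- 1%:R) * g8 + (- 1%:R) * g9 + (1%:R) * g10 + (1%:R) * g11 + (1%:R) * g12 + (- 1%:R) * g13 + (1%:R) * g14 = 0.
  have [h1 h2] := H (1%:R) (- 1%:R) (1%:R) (1%:R).
  have e : P g0 g1 g2 g3 g4 g5 g6 g7 g8 g9 g10 g11 g12 g13 g14 (1%:R) (- 1%:R) (1%:R) (1%:R) = (1%:R) * g0 + (- 1%:R) * g1 + (- 1%:R) * g2 + (1%:R) * g3 + (- 1%:R) * g4 + (1%:R) * g5 + (1%:R) * g6 + (1%:R) * g7 + (- 1%:R) * g8 + (- 1%:R) * g9 + (1%:R) * g10 + (1%:R) * g11 + (1%:R) * g12 + (- 1%:R) * g13 + (1%:R) * g14 by rewrite /P; ring.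
  have ef : Fv (1%:R) (- 1%:R) (1%:R) (1%:R) = 0 by rewrite /Fv; ring.
  lra.
have v3 : (1%:R) * g0 + (1%:R) * g1 + (- 1%:R) * g2 + (- 1%:R) * g3 + (1%:R) * g4 + (1%:R) * g5 + (- 1%:R) * g6 + (1%:R) * g7 + (- 1%:R) * g8 + (1%:R) * g9 + (1%:R) * g10 + (1%:R) * g11 + (- 1%:R) * g12 + (- 1%:R) * g13 + (1%:R) * g14 = 0.
  have [h1 h2] := H (1%:R) (- 1%:R) (- 1%:R) (1%:R).
  have e : P g0 g1 g2 g3 g4 g5 g6 g7 g8 g9 g10 g11 g12 g13 g14 (1%:R) (- 1%:R) (- 1%:R) (1%:R) = (1%:R) * g0 + (1%:R) * g1 + (- 1%:R) * g2 + (- 1%:R) * g3 + (1%:R) * g4 + (1%:R) * g5 + (- 1%:R) * g6 + (1%:R) * g7 + (- 1%:R) * g8 + (1%:R) * g9 + (1%:R) * g10 + (1%:R) * g11 + (- 1%:R) * g12 + (- 1%:R) * g13 + (1%:R) * g14 by rewrite /P; ring.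
  have ef : Fv (1%:R) (- 1%:R) (- 1%:R) (1%:R) = 0 by rewrite /Fv; ring.
  lra.
have v4 : (1%:R) * g0 + (- 1%:R) * g1 + (- 1%:R) * g2 + (- 1%:R) * g3 + (1%:R) * g4 + (1%:R) * g5 + (1%:R) * g6 + (1%:R) * g7 + (1%:R) * g8 + (1%:R) * g9 + (1%:R) * g10 + (- 1%:R) * g11 + (- 1%:R) * g12 + (- 1%:R) * g13 + (1%:R) * g14 = 0.
  have [h1 h2] := H (- 1%:R) (1%:R) (1%:R) (1%:R).
  have e : P g0 g1 g2 g3 g4 g5 g6 g7 g8 g9 g10 g11 g12 g13 g14 (- 1%:R) (1%:R) (1%:R) (1%:R) = (1%:R) * g0 + (- 1%:R) * g1 + (- 1%:R) * g2 + (- 1%:R) * g3 + (1%:R) * g4 + (1%:R) * g5 + (1%:R) * g6 + (1%:R) * g7 + (1%:R) * g8 + (1%:R) * g9 + (1%:R) * g10 + (- 1%:R) * g11 + (- 1%:R) * g12 + (- 1%:R) * g13 + (1%:R) * g14 by rewrite /P; ring.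
  have ef : Fv (- 1%:R) (1%:R) (1%:R) (1%:R) = 0 by rewrite /Fv; ring.
  lra.
have v5 : (1%:R) * g0 + (1%:R) * g1 + (- 1%:R) * g2 + (1%:R) * g3 + (- 1%:R) * g4 + (1%:R) * g5 + (- 1%:R) * g6 + (1%:R) * g7 + (1%:R) * g8 + (- 1%:R) * g9 + (1%:R) * g10 + (- 1%:R) * g11 + (1%:R) * g12 + (- 1%:R) * g13 + (1%:R) * g14 = 0.
  have [h1 h2] := H (- 1%:R) (1%:R) (- 1%:R) (1%:R).
  have e : P g0 g1 g2 g3 g4 g5 g6 g7 g8 g9 g10 g11 g12 g13 g14 (- 1%:R) (1%:R) (- 1%:R) (1%:R) = (1%:R) * g0 + (1%:R) * g1 + (- 1%:R) * g2 + (1%:R) * g3 + (- 1%:R) * g4 + (1%:R) * g5 + (- 1%:R) * g6 + (1%:R) * g7 + (1%:R) * g8 + (- 1%:R) * g9 + (1%:R) * g10 + (- 1%:R) * g11 + (1%:R) * g12 + (- 1%:R) * g13 + (1%:R) * g14 by rewrite /P; ring.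
  have ef : Fv (- 1%:R) (1%:R) (- 1%:R) (1%:R) = 0 by rewrite /Fv; ring.
  lra.
have v6 : (1%:R) * g0 + (1%:R) * g1 + (1%:R) * g2 + (- 1%:R) * g3 + (- 1%:R) * g4 + (1%:R) * g5 + (1%:R) * g6 + (1%:R) * g7 + (- 1%:R) * g8 + (- 1%:R) * g9 + (1%:R) * g10 + (- 1%:R) * g11 + (- 1%:R) * g12 + (1%:R) * g13 + (1%:R) * g14 = 0.
  have [h1 h2] := H (- 1%:R) (- 1%:R) (1%:R) (1%:R).
  have e : P g0 g1 g2 g3 g4 g5 g6 g7 g8 g9 g10 g11 g12 g13 g14 (- 1%:R) (- 1%:R) (1%:R) (1%:R) = (1%:R) * g0 + (1%:R) * g1 + (1%:R) * g2 + (- 1%:R) * g3 + (- 1%:R) * g4 + (1%:R) * g5 + (1%:R) * g6 + (1%:R) * g7 + (- 1%:R) * g8 + (- 1%:R) * g9 + (1%:R) * g10 + (- 1%:R) * g11 + (- 1%:R) * g12 + (1%:R) * g13 + (1%:R) * g14 by rewrite /P; ring.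
  have ef : Fv (- 1%:R) (- 1%:R) (1%:R) (1%:R) = 0 by rewrite /Fv; ring.
  lra.
have v7 : (1%:R) * g0 + (- 1%:R) * g1 + (1%:R) * g2 + (1%:R) * g3 + (1%:R) * g4 + (1%:R) * g5 + (- 1%:R) * g6 + (1%:R) * g7 + (- 1%:R) * g8 + (1%:R) * g9 + (1%:R) * g10 + (- 1%:R) * g11 + (1%:R) * g12 + (1%:R) * g13 + (1%:R) * g14 = 0.
  have [h1 h2] := H (- 1%:R) (- 1%:R) (- 1%:R) (1%:R).
  have e : P g0 g1 g2 g3 g4 g5 g6 g7 g8 g9 g10 g11 g12 g13 g14 (- 1%:R) (- 1%:R) (- 1%:R) (1%:R) = (1%:R) * g0 + (- 1%:R) * g1 + (1%:R) * g2 + (1%:R) * g3 + (1%:R) * g4 + (1%:R) * g5 + (- 1%:R) * g6 + (1%:R) * g7 + (- 1%:R) * g8 + (1%:R) * g9 + (1%:R) * g10 + (- 1%:R) * g11 + (1%:R) * g12 + (1%:R) * g13 + (1%:R) * g14 by rewrite /P; ring.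
  have ef : Fv (- 1%:R) (- 1%:R) (- 1%:R) (1%:R) = 0 by rewrite /Fv; ring.
  lra.
have d0 : (1%:R) * g1 + (1%:R) * g2 + (1%:R) * g3 + (2%:R) * g4 + (2%:R) * g5 + (2%:R) * g6 + (2%:R) * g7 + (2%:R) * g8 + (2%:R) * g9 + (2%:R) * g10 + (3%:R) * g11 + (3%:R) * g12 + (3%:R) * g13 + (4%:R) * g14 = 0.
  apply: (@fo ((1%:R) * g0 + (1%:R) * g1 + (1%:R) * g2 + (1%:R) * g3 + (1%:R) * g4 + (1%:R) * g5 + (1%:R) * g6 + (1%:R) * g7 + (1%:R) * g8 + (1%:R) * g9 + (1%:R) * g10 + (1%:R) * g11 + (1%:R) * g12 + (1%:R) * g13 + (1%:R) * g14) ((1%:R) * g1 + (1%:R) * g2 + (1%:R) * g3 + (2%:R) * g4 + (2%:R) * g5 + (2%:R) * g6 + (2%:R) * g7 + (2%:R) * g8 + (2%:R) * g9 + (2%:R) * g10 + (3%:R) * g11 + (3%:R) * g12 + (3%:R) * g13 + (4%:R) * g14) [:: ((1%:R) * g4 + (1%:R) * g5 + (1%:R) * g6 + (1%:R) * g7 + (1%:R) * g8 + (1%:R) * g9 + (1%:R) * g10 + (3%:R) * g11 + (3%:R) * g12 + (3%:R) * g13 + (6%:R) * g14); ((1%:R) * g11 + (1%:R) * g12 + (1%:R) * g13 + (4%:R) * g14); ((1%:R) * g14); (0); (0); (0); (0)]); last by lra.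
  move=> t; have [h _] := H ((1%:R) + t) (1%:R) (1%:R) (1%:R).
  have e : P g0 g1 g2 g3 g4 g5 g6 g7 g8 g9 g10 g11 g12 g13 g14 ((1%:R) + t) (1%:R) (1%:R) (1%:R) = ((1%:R) * g0 + (1%:R) * g1 + (1%:R) * g2 + (1%:R) * g3 + (1%:R) * g4 + (1%:R) * g5 + (1%:R) * g6 + (1%:R) * g7 + (1%:R) * g8 + (1%:R) * g9 + (1%:R) * g10 + (1%:R) * g11 + (1%:R) * g12 + (1%:R) * g13 + (1%:R) * g14) + ((1%:R) * g1 + (1%:R) * g2 + (1%:R) * g3 + (2%:R) * g4 + (2%:R) * g5 + (2%:R) * g6 + (2%:R) * g7 + (2%:R) * g8 + (2%:R) * g9 + (2%:R) * g10 + (3%:R) * g11 + (3%:R) * g12 + (3%:R) * g13 + (4%:R) * g14) * t + t ^+ 2 * hornr [:: ((1%:R) * g4 + (1%:R) * g5 + (1%:R) * g6 + (1%:R) * g7 + (1%:R) * g8 + (1%:R) * g9 + (1%:R) * g10 + (3%:R) * g11 + (3%:R) * g12 + (3%:R) * g13 + (6%:R) * g14); ((1%:R) * g11 + (1%:R) * g12 + (1%:R) * g13 + (4%:R) * g14); ((1%:R) * g14); (0); (0); (0); (0)] t by rewrite /P /=; ring.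
  by rewrite -e.
have d1 : (1%:R) * g1 + (1%:R) * g2 + (2%:R) * g3 + (1%:R) * g4 + (2%:R) * g5 + (2%:R) * g6 + (2%:R) * g7 + (3%:R) * g8 + (3%:R) * g9 + (4%:R) * g10 + (2%:R) * g11 + (2%:R) * g12 + (3%:R) * g13 + (2%:R) * g14 = 0.
  apply: (@fo ((1%:R) * g0 + (1%:R) * g1 + (1%:R) * g2 + (1%:R) * g3 + (1%:R) * g4 + (1%:R) * g5 + (1%:R) * g6 + (1%:R) * g7 + (1%:R) * g8 + (1%:R) * g9 + (1%:R) * g10 + (1%:R) * g11 + (1%:R) * g12 + (1%:R) * g13 + (1%:R) * g14) ((1%:R) * g1 + (1%:R) * g2 + (2%:R) * g3 + (1%:R) * g4 + (2%:R) * g5 + (2%:R) * g6 + (2%:R) * g7 + (3%:R) * g8 + (3%:R) * g9 + (4%:R) * g10 + (2%:R) * g11 + (2%:R) * g12 + (3%:R) * g13 + (2%:R) * g14) [:: ((1%:R) * g3 + (1%:R) * g5 + (1%:R) * g6 + (1%:R) * g7 + (3%:R) * g8 + (3%:R) * g9 + (6%:R) * g10 + (1%:R) * g11 + (1%:R) * g12 + (3%:R) * g13 + (1%:R) * g14); ((1%:R) * g8 + (1%:R) * g9 + (4%:R) * g10 + (1%:R) * g13); ((1%:R) * g10); (0); (0); (0); (0)]); last by lra.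
  move=> t; have [h _] := H (1%:R) ((1%:R) + t) (1%:R) (1%:R).
  have e : P g0 g1 g2 g3 g4 g5 g6 g7 g8 g9 g10 g11 g12 g13 g14 (1%:R) ((1%:R) + t) (1%:R) (1%:R) = ((1%:R) * g0 + (1%:R) * g1 + (1%:R) * g2 + (1%:R) * g3 + (1%:R) * g4 + (1%:R) * g5 + (1%:R) * g6 + (1%:R) * g7 + (1%:R) * g8 + (1%:R) * g9 + (1%:R) * g10 + (1%:R) * g11 + (1%:R) * g12 + (1%:R) * g13 + (1%:R) * g14) + ((1%:R) * g1 + (1%:R) * g2 + (2%:R) * g3 + (1%:R) * g4 + (2%:R) * g5 + (2%:R) * g6 + (2%:R) * g7 + (3%:R) * g8 + (3%:R) * g9 + (4%:R) * g10 + (2%:R) * g11 + (2%:R) * g12 + (3%:R) * g13 + (2%:R) * g14) * t + t ^+ 2 * hornr [:: ((1%:R) * g3 + (1%:R) * g5 + (1%:R) * g6 + (1%:R) * g7 + (3%:R) * g8 + (3%:R) * g9 + (6%:R) * g10 + (1%:R) * g11 + (1%:R) * g12 + (3%:R) * g13 + (1%:R) * g14); ((1%:R) * g8 + (1%:R) * g9 + (4%:R) * g10 + (1%:R) * g13); ((1%:R) * g10); (0); (0); (0); (0)] t by rewrite /P /=; ring.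
  by rewrite -e.
have d2 : (1%:R) * g1 + (2%:R) * g2 + (1%:R) * g3 + (1%:R) * g4 + (2%:R) * g5 + (3%:R) * g6 + (4%:R) * g7 + (2%:R) * g8 + (3%:R) * g9 + (2%:R) * g10 + (2%:R) * g11 + (3%:R) * g12 + (2%:R) * g13 + (2%:R) * g14 = 0.
  apply: (@fo ((1%:R) * g0 + (1%:R) * g1 + (1%:R) * g2 + (1%:R) * g3 + (1%:R) * g4 + (1%:R) * g5 + (1%:R) * g6 + (1%:R) * g7 + (1%:R) * g8 + (1%:R) * g9 + (1%:R) * g10 + (1%:R) * g11 + (1%:R) * g12 + (1%:R) * g13 + (1%:R) * g14) ((1%:R) * g1 + (2%:R) * g2 + (1%:R) * g3 + (1%:R) * g4 + (2%:R) * g5 + (3%:R) * g6 + (4%:R) * g7 + (2%:R) * g8 + (3%:R) * g9 + (2%:R) * g10 + (2%:R) * g11 + (3%:R) * g12 + (2%:R) * g13 + (2%:R) * g14) [:: ((1%:R) * g2 + (1%:R) * g5 + (3%:R) * g6 + (6%:R) * g7 + (1%:R) * g8 + (3%:R) * g9 + (1%:R) * g10 + (1%:R) * g11 + (3%:R) * g12 + (1%:R) * g13 + (1%:R) * g14); ((1%:R) * g6 + (4%:R) * g7 + (1%:R) * g9 + (1%:R) * g12); ((1%:R) * g7); (0); (0); (0); (0)]); last by lra.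
  move=> t; have [h _] := H (1%:R) (1%:R) ((1%:R) + t) (1%:R).
  have e : P g0 g1 g2 g3 g4 g5 g6 g7 g8 g9 g10 g11 g12 g13 g14 (1%:R) (1%:R) ((1%:R) + t) (1%:R) = ((1%:R) * g0 + (1%:R) * g1 + (1%:R) * g2 + (1%:R) * g3 + (1%:R) * g4 + (1%:R) * g5 + (1%:R) * g6 + (1%:R) * g7 + (1%:R) * g8 + (1%:R) * g9 + (1%:R) * g10 + (1%:R) * g11 + (1%:R) * g12 + (1%:R) * g13 + (1%:R) * g14) + ((1%:R) * g1 + (2%:R) * g2 + (1%:R) * g3 + (1%:R) * g4 + (2%:R) * g5 + (3%:R) * g6 + (4%:R) * g7 + (2%:R) * g8 + (3%:R) * g9 + (2%:R) * g10 + (2%:R) * g11 + (3%:R) * g12 + (2%:R) * g13 + (2%:R) * g14) * t + t ^+ 2 * hornr [:: ((1%:R) * g2 + (1%:R) * g5 + (3%:R) * g6 + (6%:R) * g7 + (1%:R) * g8 + (3%:R) * g9 + (1%:R) * g10 + (1%:R) * g11 + (3%:R) * g12 + (1%:R) * g13 + (1%:R) * g14); ((1%:R) * g6 + (4%:R) * g7 + (1%:R) * g9 + (1%:R) * g12); ((1%:R) * g7); (0); (0); (0); (0)] t by rewrite /P /=; ring.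
  by rewrite -e.
have d3 : (- 1%:R) * g1 + (1%:R) * g2 + (- 1%:R) * g3 + (- 2%:R) * g4 + (2%:R) * g5 + (- 2%:R) * g6 + (2%:R) * g7 + (2%:R) * g8 + (- 2%:R) * g9 + (2%:R) * g10 + (3%:R) * g11 + (- 3%:R) * g12 + (3%:R) * g13 + (4%:R) * g14 = 0.
  apply: (@fo ((1%:R) * g0 + (- 1%:R) * g1 + (1%:R) * g2 + (- 1%:R) * g3 + (- 1%:R) * g4 + (1%:R) * g5 + (- 1%:R) * g6 + (1%:R) * g7 + (1%:R) * g8 + (- 1%:R) * g9 + (1%:R) * g10 + (1%:R) * g11 + (- 1%:R) * g12 + (1%:R) * g13 + (1%:R) * g14) ((- 1%:R) * g1 + (1%:R) * g2 + (- 1%:R) * g3 + (- 2%:R) * g4 + (2%:R) * g5 + (- 2%:R) * g6 + (2%:R) * g7 + (2%:R) * g8 + (- 2%:R) * g9 + (2%:R) * g10 + (3%:R) * g11 + (- 3%:R) * g12 + (3%:R) * g13 + (4%:R) * g14) [:: ((- 1%:R) * g4 + (1%:R) * g5 + (- 1%:R) * g6 + (1%:R) * g7 + (1%:R) * g8 + (- 1%:R) * g9 + (1%:R) * g10 + (3%:R) * g11 + (- 3%:R) * g12 + (3%:R) * g13 + (6%:R) * g14); ((1%:R) * g11 + (- 1%:R) * g12 + (1%:R) * g13 + (4%:R) * g14); ((1%:R) * g14); (0); (0); (0); (0)]); last by lra.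
  move=> t; have [h _] := H ((1%:R) + t) (1%:R) (- 1%:R) (1%:R).
  have e : P g0 g1 g2 g3 g4 g5 g6 g7 g8 g9 g10 g11 g12 g13 g14 ((1%:R) + t) (1%:R) (- 1%:R) (1%:R) = ((1%:R) * g0 + (- 1%:R) * g1 + (1%:R) * g2 + (- 1%:R) * g3 + (- 1%:R) * g4 + (1%:R) * g5 + (- 1%:R) * g6 + (1%:R) * g7 + (1%:R) * g8 + (- 1%:R) * g9 + (1%:R) * g10 + (1%:R) * g11 + (- 1%:R) * g12 + (1%:R) * g13 + (1%:R) * g14) + ((- 1%:R) * g1 + (1%:R) * g2 + (- 1%:R) * g3 + (- 2%:R) * g4 + (2%:R) * g5 + (- 2%:R) * g6 + (2%:R) * g7 + (2%:R) * g8 + (- 2%:R) * g9 + (2%:R) * g10 + (3%:R) * g11 + (- 3%:R) * g12 + (3%:R) * g13 + (4%:R) * g14) * t + t ^+ 2 * hornr [:: ((- 1%:R) * g4 + (1%:R) * g5 + (- 1%:R) * g6 + (1%:R) * g7 + (1%:R) * g8 + (- 1%:R) * g9 + (1%:R) * g10 + (3%:R) * g11 + (- 3%:R) * g12 + (3%:R) * g13 + (6%:R) * g14); ((1%:R) * g11 + (- 1%:R) * g12 + (1%:R) * g13 + (4%:R) * g14); ((1%:R) * g14); (0); (0); (0); (0)] t by rewrite /P /=; ring.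
  by rewrite -e.
have d4 : (- 1%:R) * g1 + (1%:R) * g2 + (- 2%:R) * g3 + (- 1%:R) * g4 + (2%:R) * g5 + (- 2%:R) * g6 + (2%:R) * g7 + (3%:R) * g8 + (- 3%:R) * g9 + (4%:R) * g10 + (2%:R) * g11 + (- 2%:R) * g12 + (3%:R) * g13 + (2%:R) * g14 = 0.
  apply: (@fo ((1%:R) * g0 + (- 1%:R) * g1 + (1%:R) * g2 + (- 1%:R) * g3 + (- 1%:R) * g4 + (1%:R) * g5 + (- 1%:R) * g6 + (1%:R) * g7 + (1%:R) * g8 + (- 1%:R) * g9 + (1%:R) * g10 + (1%:R) * g11 + (- 1%:R) * g12 + (1%:R) * g13 + (1%:R) * g14) ((- 1%:R) * g1 + (1%:R) * g2 + (- 2%:R) * g3 + (- 1%:R) * g4 + (2%:R) * g5 + (- 2%:R) * g6 + (2%:R) * g7 + (3%:R) * g8 + (- 3%:R) * g9 + (4%:R) * g10 + (2%:R) * g11 + (- 2%:R) * g12 + (3%:R) * g13 + (2%:R) * g14) [:: ((- 1%:R) * g3 + (1%:R) * g5 + (- 1%:R) * g6 + (1%:R) * g7 + (3%:R) * g8 + (- 3%:R) * g9 + (6%:R) * g10 + (1%:R) * g11 + (- 1%:R) * g12 + (3%:R) * g13 + (1%:R) * g14); ((1%:R) * g8 + (- 1%:R) * g9 + (4%:R) * g10 + (1%:R) * g13); ((1%:R) * g10); (0); (0); (0); (0)]); last by lra.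
  move=> t; have [h _] := H (1%:R) ((1%:R) + t) (- 1%:R) (1%:R).
  have e : P g0 g1 g2 g3 g4 g5 g6 g7 g8 g9 g10 g11 g12 g13 g14 (1%:R) ((1%:R) + t) (- 1%:R) (1%:R) = ((1%:R) * g0 + (- 1%:R) * g1 + (1%:R) * g2 + (- 1%:R) * g3 + (- 1%:R) * g4 + (1%:R) * g5 + (- 1%:R) * g6 + (1%:R) * g7 + (1%:R) * g8 + (- 1%:R) * g9 + (1%:R) * g10 + (1%:R) * g11 + (- 1%:R) * g12 + (1%:R) * g13 + (1%:R) * g14) + ((- 1%:R) * g1 + (1%:R) * g2 + (- 2%:R) * g3 + (- 1%:R) * g4 + (2%:R) * g5 + (- 2%:R) * g6 + (2%:R) * g7 + (3%:R) * g8 + (- 3%:R) * g9 + (4%:R) * g10 + (2%:R) * g11 + (- 2%:R) * g12 + (3%:R) * g13 + (2%:R) * g14) * t + t ^+ 2 * hornr [:: ((- 1%:R) * g3 + (1%:R) * g5 + (- 1%:R) * g6 + (1%:R) * g7 + (3%:R) * g8 + (- 3%:R) * g9 + (6%:R) * g10 + (1%:R) * g11 + (- 1%:R) * g12 + (3%:R) * g13 + (1%:R) * g14); ((1%:R) * g8 + (- 1%:R) * g9 + (4%:R) * g10 + (1%:R) * g13); ((1%:R) * g10); (0); (0); (0); (0)] t by rewrite /P /=; ring.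
  by rewrite -e.
have d5 : (- 1%:R) * g1 + (- 1%:R) * g2 + (1%:R) * g3 + (- 2%:R) * g4 + (2%:R) * g5 + (2%:R) * g6 + (2%:R) * g7 + (- 2%:R) * g8 + (- 2%:R) * g9 + (2%:R) * g10 + (3%:R) * g11 + (3%:R) * g12 + (- 3%:R) * g13 + (4%:R) * g14 = 0.
  apply: (@fo ((1%:R) * g0 + (- 1%:R) * g1 + (- 1%:R) * g2 + (1%:R) * g3 + (- 1%:R) * g4 + (1%:R) * g5 + (1%:R) * g6 + (1%:R) * g7 + (- 1%:R) * g8 + (- 1%:R) * g9 + (1%:R) * g10 + (1%:R) * g11 + (1%:R) * g12 + (- 1%:R) * g13 + (1%:R) * g14) ((- 1%:R) * g1 + (- 1%:R) * g2 + (1%:R) * g3 + (- 2%:R) * g4 + (2%:R) * g5 + (2%:R) * g6 + (2%:R) * g7 + (- 2%:R) * g8 + (- 2%:R) * g9 + (2%:R) * g10 + (3%:R) * g11 + (3%:R) * g12 + (- 3%:R) * g13 + (4%:R) * g14) [:: ((- 1%:R) * g4 + (1%:R) * g5 + (1%:R) * g6 + (1%:R) * g7 + (- 1%:R) * g8 + (- 1%:R) * g9 + (1%:R) * g10 + (3%:R) * g11 + (3%:R) * g12 + (- 3%:R) * g13 + (6%:R) * g14); ((1%:R) * g11 + (1%:R) * g12 + (- 1%:R) * g13 + (4%:R) * g14); ((1%:R) * g14); (0); (0); (0); (0)]); last by lra.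
  move=> t; have [h _] := H ((1%:R) + t) (- 1%:R) (1%:R) (1%:R).
  have e : P g0 g1 g2 g3 g4 g5 g6 g7 g8 g9 g10 g11 g12 g13 g14 ((1%:R) + t) (- 1%:R) (1%:R) (1%:R) = ((1%:R) * g0 + (- 1%:R) * g1 + (- 1%:R) * g2 + (1%:R) * g3 + (- 1%:R) * g4 + (1%:R) * g5 + (1%:R) * g6 + (1%:R) * g7 + (- 1%:R) * g8 + (- 1%:R) * g9 + (1%:R) * g10 + (1%:R) * g11 + (1%:R) * g12 + (- 1%:R) * g13 + (1%:R) * g14) + ((- 1%:R) * g1 + (- 1%:R) * g2 + (1%:R) * g3 + (- 2%:R) * g4 + (2%:R) * g5 + (2%:R) * g6 + (2%:R) * g7 + (- 2%:R) * g8 + (- 2%:R) * g9 + (2%:R) * g10 + (3%:R) * g11 + (3%:R) * g12 + (- 3%:R) * g13 + (4%:R) * g14) * t + t ^+ 2 * hornr [:: ((- 1%:R) * g4 + (1%:R) * g5 + (1%:R) * g6 + (1%:R) * g7 + (- 1%:R) * g8 + (- 1%:R) * g9 + (1%:R) * g10 + (3%:R) * g11 + (3%:R) * g12 + (- 3%:R) * g13 + (6%:R) * g14); ((1%:R) * g11 + (1%:R) * g12 + (- 1%:R) * g13 + (4%:R) * g14); ((1%:R) * g14); (0); (0); (0); (0)] t by rewrite /P /=; ring.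
  by rewrite -e.
by repeat split; lra.
Qed.
End Fin.


Section Psd.
Variable R : realType.

Lemma amgm3 (A B C : R) : 0 <= A -> 0 <= B -> 0 <= C ->
  27%:R * (A * B * C) <= (A + B + C) ^+ 3.
Proof.
move=> hA hB hC.
have key : 2%:R * ((A + B + C) ^+ 3 - 27%:R * (A * B * C)) =
  (A + B + C) * ((A - B) ^+ 2 + (B - C) ^+ 2 + (C - A) ^+ 2) +
  6%:R * (A * (B - C) ^+ 2 + B * (C - A) ^+ 2 + C * (A - B) ^+ 2) by ring.
have h1 : 0 <= (A + B + C) * ((A - B) ^+ 2 + (B - C) ^+ 2 + (C - A) ^+ 2).
  by apply: mulr_ge0; [lra | rewrite !addr_ge0 ?sqr_ge0].
have h2 : 0 <= A * (B - C) ^+ 2 + B * (C - A) ^+ 2 + C * (A - B) ^+ 2.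
  by rewrite !addr_ge0 // mulr_ge0 // sqr_ge0.
lra.
Qed.

Lemma Fv_ge0 (a b c d : R) : 0 <= Fv a b c d.
Proof.
have e : Fv a b c d = (d ^+ 2) ^+ 4 + (a ^+ 2 * b ^+ 2 * c ^+ 2) *
   (a ^+ 2 + b ^+ 2 + c ^+ 2 - 4%:R * d ^+ 2) by rewrite /Fv; ring.
rewrite e; move: (sqr_ge0 a) (sqr_ge0 b) (sqr_ge0 c) (sqr_ge0 d).
move: (a ^+ 2) (b ^+ 2) (c ^+ 2) (d ^+ 2) => A B C u hA hB hC hu.
have hs : 27%:R * (A * B * C) <= (A + B + C) ^+ 3 by exact: amgm3.
have hP : 0 <= A * B * C by rewrite !mulr_ge0.
move: hs hP; move: (A * B * C) (A + B + C) => Pr s hs hP.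
case: (lerP (4%:R * u) s) => h.
  have : 0 <= Pr * (s - 4%:R * u) by rewrite mulr_ge0 // subr_ge0.
  have : 0 <= u ^+ 4 by rewrite exprn_ge0.
  lra.
have h1 : 27%:R * (Pr * (s - 4%:R * u)) >= s ^+ 3 * (s - 4%:R * u).
  have -> : 27%:R * (Pr * (s - 4%:R * u)) = (27%:R * Pr) * (s - 4%:R * u) by ring.
  rewrite ler_wnM2r //; lra.
have id : 27%:R * u ^+ 4 + s ^+ 3 * (s - 4%:R * u) =
   (3%:R * u - s) ^+ 2 * (2%:R * u ^+ 2 + (u + s) ^+ 2) by ring.
have h2 : 0 <= (3%:R * u - s) ^+ 2 * (2%:R * u ^+ 2 + (u + s) ^+ 2).
  apply: mulr_ge0; first exact: sqr_ge0.
  have := sqr_ge0 u; have := sqr_ge0 (u + s); move=> ? ?; lra.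
lra.
Qed.
End Psd.


Definition mk (a b c d : nat) : 'X_{1..4} := [multinom [tuple a; b; c; d]].

Lemma ord4_1 : lift ord0 ord0 = (1 : 'I_4). Proof. exact/val_inj. Qed.
Lemma ord4_2 : lift ord0 (lift ord0 ord0) = (2 : 'I_4). Proof. exact/val_inj. Qed.
Lemma ord4_3 : lift ord0 (lift ord0 (lift ord0 ord0)) = (3 : 'I_4). Proof. exact/val_inj. Qed.
Lemma ord4_0 : ord0 = (0 : 'I_4). Proof. exact/val_inj. Qed.

Section C.
Variable R : realType.

Lemma evalX (x : 'I_4 -> R) a b c d :
  ('X_[mk a b c d] : {mpoly R[4]}).@[x] =
  x 0 ^+ a * x 1 ^+ b * x 2 ^+ c * x 3 ^+ d.
Proof.
rewrite mevalX !big_ord_recl big_ord0 mulr1 ord4_1 ord4_2 ord4_3 ord4_0.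
by rewrite !mulrA.
Qed.

Lemma XmkE a b c d : ('X_[mk a b c d] : {mpoly R[4]}) =
  'X_(0 : 'I_4) ^+ a * 'X_(1 : 'I_4) ^+ b * 'X_(2 : 'I_4) ^+ c * 'X_(3 : 'I_4) ^+ d.
Proof.
rewrite mpolyXE_id !big_ord_recl big_ord0 mulr1 ord4_1 ord4_2 ord4_3 ord4_0.
by rewrite !mulrA.
Qed.

Definition Fl : {mpoly R[4]} := 'X_[mk 0 0 0 8] + 'X_[mk 4 2 2 0] + 'X_[mk 2 4 2 0]
   + 'X_[mk 2 2 4 0] - (4%:R : R) *: 'X_[mk 2 2 2 2].

Lemma O41E : O41 R = Fl.
Proof.
rewrite /O41 /Fl !XmkE -mul_mpolyC. 
rewrite !expr0 !mulr1 !mul1r.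
have -> : (4%:R : R)%:MP = 4%:R :> {mpoly R[4]} by rewrite rmorph_nat.
ring.
Qed.

End C.


Lemma mnm4E (m : 'X_{1..4}) : m = mk (m i0) (m i1) (m i2) (m i3).
Proof.
apply/mnmP => i; case: i => [[|[|[|[|//]]]] hi] /=; apply: (congr1 m); exact: val_inj.
Qed.

Lemma mdeg4 (m : 'X_{1..4}) : mdeg m = (m i0 + m i1 + m i2 + m i3)%N.
Proof.
rewrite mdegE !big_ord_recl big_ord0 ord4_1 ord4_2 ord4_3 ord4_0; lia.
Qed.

Lemma mkE0 a b c d : mk a b c d i0 = a. Proof. by []. Qed.
Lemma mkE1 a b c d : mk a b c d i1 = b. Proof. by []. Qed.
Lemma mkE2 a b c d : mk a b c d i2 = c. Proof. by []. Qed.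
Lemma mkE3 a b c d : mk a b c d i3 = d. Proof. by []. Qed.

Definition L : seq 'X_{1..4} := [:: mk 0 0 0 8; mk 1 1 1 5; mk 1 1 2 4; mk 1 2 1 4;
  mk 2 1 1 4; mk 2 2 2 2; mk 2 2 3 1; mk 2 2 4 0; mk 2 3 2 1; mk 2 3 3 0;
  mk 2 4 2 0; mk 3 2 2 1; mk 3 2 3 0; mk 3 3 2 0; mk 4 2 2 0].

Lemma L_uniq : uniq L. Proof. by vm_compute. Qed.

Definition facets (a b c d : nat) : bool :=
  [&& (4 * b + 4 * c + 3 * d <= 24)%N, (4 * a + 4 * c + 3 * d <= 24)%N
   & (4 * a + 4 * b + 3 * d <= 24)%N].

Definition chk : bool :=
  all (fun a => all (fun b => all (fun d =>
     (facets a b (8 - a - b - d) d && (a + b + d <= 8)%N) ==> (mk a b (8 - a - b - d) d \in L))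
     (iota 0 9)) (iota 0 9)) (iota 0 9).

Lemma chkT : chk. Proof. by vm_compute. Qed.

Lemma inL (m : 'X_{1..4}) : mdeg m = 8%N -> facets (m i0) (m i1) (m i2) (m i3) -> m \in L.
Proof.
rewrite mdeg4 => hd hf.
have := chkT; rewrite /chk => /allP /(_ (m i0)); rewrite mem_iota => /(_ ltac:(lia)).
move=> /allP /(_ (m i1)); rewrite mem_iota => /(_ ltac:(lia)).
move=> /allP /(_ (m i3)); rewrite mem_iota => /(_ ltac:(lia)).
have -> : (8 - m i0 - m i1 - m i3 = m i2)%N by lia.
rewrite hf /= -mnm4E => /implyP; apply; lia.
Qed.

Section Main.
Variable R : realType.

Lemma repr_seq (G : {mpoly R[4]}) (s : seq 'X_{1..4}) :
  uniq s -> {subset msupp G <= s} -> G = \sum_(m <- s) G@_m *: 'X_[m].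
Proof.
move=> us hs; apply/mpolyP => k.
rewrite raddf_sum /=.
under eq_bigr => m _ do rewrite mcoeffZ mcoeffX.
case: (boolP (k \in s)) => hk.
  rewrite (bigD1_seq k) //= eqxx mulr1 big1 ?addr0 // => m hm.
  by rewrite (negbTE hm) mulr0.
rewrite big_seq big1; last first.
  move=> m hm; case: eqP => [e|]; last by rewrite mulr0.
  by rewrite -e hm in hk.
apply: memN_msupp_eq0; apply: contra hk; exact: hs.
Qed.

Lemma msupp_Fl m : m \in msupp (Fl R) ->
  m \in [:: mk 0 0 0 8; mk 4 2 2 0; mk 2 4 2 0; mk 2 2 4 0; mk 2 2 2 2].
Proof.
rewrite mcoeff_msupp /Fl mcoeffB !mcoeffD mcoeffZ !mcoeffX.
apply: contraR => hn.
have h1 : (mk 0 0 0 8 == m) = false by apply/negP => /eqP e; rewrite -e !inE eqxx in hn.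
have h2 : (mk 4 2 2 0 == m) = false by apply/negP => /eqP e; rewrite -e !inE eqxx ?orbT in hn.
have h3 : (mk 2 4 2 0 == m) = false by apply/negP => /eqP e; rewrite -e !inE eqxx ?orbT in hn.
have h4 : (mk 2 2 4 0 == m) = false by apply/negP => /eqP e; rewrite -e !inE eqxx ?orbT in hn.
have h5 : (mk 2 2 2 2 == m) = false by apply/negP => /eqP e; rewrite -e !inE eqxx ?orbT in hn.
by rewrite h1 h2 h3 h4 h5 /= !addr0 mulr0 subr0.
Qed.

Definition pt (a b c d : R) : 'I_4 -> R := fun i => nth 0 [:: a; b; c; d] i.

Lemma evalFl (x : 'I_4 -> R) : (Fl R).@[x] = Fv (x i0) (x i1) (x i2) (x i3).
Proof.
rewrite /Fl mevalB !mevalD mevalZ !evalX /Fv; ring.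
Qed.

Lemma evalG (G : {mpoly R[4]}) (x : 'I_4 -> R) : {subset msupp G <= L} ->
  G.@[x] = P (G@_(mk 0 0 0 8)) (G@_(mk 1 1 1 5)) (G@_(mk 1 1 2 4)) (G@_(mk 1 2 1 4))
  (G@_(mk 2 1 1 4)) (G@_(mk 2 2 2 2)) (G@_(mk 2 2 3 1)) (G@_(mk 2 2 4 0)) (G@_(mk 2 3 2 1))
  (G@_(mk 2 3 3 0)) (G@_(mk 2 4 2 0)) (G@_(mk 3 2 2 1)) (G@_(mk 3 2 3 0)) (G@_(mk 3 3 2 0))
  (G@_(mk 4 2 2 0)) (x i0) (x i1) (x i2) (x i3).
Proof.
move=> hs; rewrite {1}(repr_seq L_uniq hs) raddf_sum /= /L !big_cons big_nil.
rewrite !mevalZ !evalX /P; ring.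
Qed.

End Main.


Lemma divmod_uniq (K a b c d : nat) : (b < K)%N -> (d < K)%N -> (a * K + b = c * K + d)%N ->
  a = c /\ b = d.
Proof.
move=> hb hd e; have K0 : (0 < K)%N by lia.
have := congr1 (fun x => x %/ K)%N e; rewrite /= !divnMDl // !divn_small // !addn0 => ac.
split => //; subst; lia.
Qed.

Section Fac.
Variable R : realType.

Lemma facet_gen lam (u tau : 'X_{1..4} -> nat) (G : {mpoly R[4]}) :
  (forall m, ew lam m = u m * 649 + tau m)%N ->
  (forall m, mdeg m = 8 -> tau m < 649)%N ->
  (forall m1 m2, mdeg m1 = 8%N -> mdeg m2 = 8%N -> u m1 = u m2 -> tau m1 = tau m2 -> m1 = m2) ->
  (forall m, m \in msupp (Fl R) -> (u m <= 24) /\ (tau m < 649))%N ->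
  G \is 8.-homog ->
  (forall x, 0 <= G.@[x] /\ G.@[x] <= (Fl R).@[x]) ->
  forall m, m \in msupp G -> (u m <= 24)%N.
Proof.
move=> hew htau hinj hF /dhomogP hd H m hm.
have inj : {in msupp G &, injective (ew lam)}.
  move=> m1 m2 h1 h2; rewrite !hew => e.
  have [eu et] := divmod_uniq (htau _ (hd _ h1)) (htau _ (hd _ h2)) e.
  exact: hinj (hd _ h1) (hd _ h2) eu et.
have [m' hm' hle] := @NP R 4 lam G (Fl R) (fun t _ => H _) inj m hm.
move: hle; rewrite !hew; have [h1 h2] := hF _ hm'; have := htau _ (hd _ hm); lia.
Qed.

Definition lamA : 'I_4 -> nat := fun i => nth 0%N [:: 0; 2597; 2605; 2028]%N i.
Definition uA (m : 'X_{1..4}) : nat := (4 * m i1 + 4 * m i2 + 3 * m i3)%N.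
Definition tauA (m : 'X_{1..4}) : nat := ((m i3 * 9 + m i2) * 9 + m i1)%N.

Lemma ewA m : ew lamA m = (uA m * 649 + tauA m)%N.
Proof.
rewrite /ew /uA /tauA !big_ord_recl big_ord0 /= ord4_1 ord4_2 ord4_3 ord4_0.
have -> : lamA i0 = nth 0%N [:: 0; 2597; 2605; 2028]%N 0 by [].
have -> : lamA i1 = nth 0%N [:: 0; 2597; 2605; 2028]%N 1 by [].
have -> : lamA i2 = nth 0%N [:: 0; 2597; 2605; 2028]%N 2 by [].
have -> : lamA i3 = nth 0%N [:: 0; 2597; 2605; 2028]%N 3 by [].
rewrite /=; lia.
Qed.

Lemma tauA_lt m : mdeg m = 8%N -> (tauA m < 649)%N.
Proof. rewrite mdeg4 /tauA; lia. Qed.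

Lemma injA m1 m2 : mdeg m1 = 8%N -> mdeg m2 = 8%N -> uA m1 = uA m2 -> tauA m1 = tauA m2 -> m1 = m2.
Proof.
rewrite !mdeg4 /uA /tauA => d1 d2 eu et.
have [e1 e2] := divmod_uniq (ltac:(lia) : (m1 i1 < 9)%N) (ltac:(lia) : (m2 i1 < 9)%N) et.
have [e3 e4] := divmod_uniq (ltac:(lia) : (m1 i2 < 9)%N) (ltac:(lia) : (m2 i2 < 9)%N) e1.
have e5 : m1 i0 = m2 i0 by lia.
rewrite (mnm4E m1) (mnm4E m2); congr mk; lia.
Qed.

Lemma FA m : m \in msupp (Fl R) -> (uA m <= 24)%N /\ (tauA m < 649)%N.
Proof.
move/msupp_Fl; rewrite !inE => /orP[/eqP->|/orP[/eqP->|/orP[/eqP->|/orP[/eqP->|/eqP->]]]];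
  by rewrite /uA /tauA ?mkE0 ?mkE1 ?mkE2 ?mkE3.
Qed.

Lemma facetA (G : {mpoly R[4]}) : G \is 8.-homog ->
  (forall x, 0 <= G.@[x] /\ G.@[x] <= (Fl R).@[x]) ->
  forall m, m \in msupp G -> (uA m <= 24)%N.
Proof. exact: (facet_gen ewA tauA_lt injA FA). Qed.

Definition lamB : 'I_4 -> nat := fun i => nth 0%N [:: 2597; 0; 2605; 2028]%N i.
Definition uB (m : 'X_{1..4}) : nat := (4 * m i0 + 4 * m i2 + 3 * m i3)%N.
Definition tauB (m : 'X_{1..4}) : nat := ((m i3 * 9 + m i2) * 9 + m i0)%N.

Lemma ewB m : ew lamB m = (uB m * 649 + tauB m)%N.
Proof.
rewrite /ew /uB /tauB !big_ord_recl big_ord0 /= ord4_1 ord4_2 ord4_3 ord4_0.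
have -> : lamB i0 = nth 0%N [:: 2597; 0; 2605; 2028]%N 0 by [].
have -> : lamB i1 = nth 0%N [:: 2597; 0; 2605; 2028]%N 1 by [].
have -> : lamB i2 = nth 0%N [:: 2597; 0; 2605; 2028]%N 2 by [].
have -> : lamB i3 = nth 0%N [:: 2597; 0; 2605; 2028]%N 3 by [].
rewrite /=; lia.
Qed.

Lemma tauB_lt m : mdeg m = 8%N -> (tauB m < 649)%N.
Proof. rewrite mdeg4 /tauB; lia. Qed.

Lemma injB m1 m2 : mdeg m1 = 8%N -> mdeg m2 = 8%N -> uB m1 = uB m2 -> tauB m1 = tauB m2 -> m1 = m2.
Proof.
rewrite !mdeg4 /uB /tauB => d1 d2 eu et.
have [e1 e2] := divmod_uniq (ltac:(lia) : (m1 i0 < 9)%N) (ltac:(lia) : (m2 i0 < 9)%N) et.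
have [e3 e4] := divmod_uniq (ltac:(lia) : (m1 i2 < 9)%N) (ltac:(lia) : (m2 i2 < 9)%N) e1.
have e5 : m1 i1 = m2 i1 by lia.
rewrite (mnm4E m1) (mnm4E m2); congr mk; lia.
Qed.

Lemma FB m : m \in msupp (Fl R) -> (uB m <= 24)%N /\ (tauB m < 649)%N.
Proof.
move/msupp_Fl; rewrite !inE => /orP[/eqP->|/orP[/eqP->|/orP[/eqP->|/orP[/eqP->|/eqP->]]]];
  by rewrite /uB /tauB ?mkE0 ?mkE1 ?mkE2 ?mkE3.
Qed.

Lemma facetB (G : {mpoly R[4]}) : G \is 8.-homog ->
  (forall x, 0 <= G.@[x] /\ G.@[x] <= (Fl R).@[x]) ->
  forall m, m \in msupp G -> (uB m <= 24)%N.
Proof. exact: (facet_gen ewB tauB_lt injB FB). Qed.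

Definition lamC : 'I_4 -> nat := fun i => nth 0%N [:: 2597; 2605; 0; 2028]%N i.
Definition uC (m : 'X_{1..4}) : nat := (4 * m i0 + 4 * m i1 + 3 * m i3)%N.
Definition tauC (m : 'X_{1..4}) : nat := ((m i3 * 9 + m i1) * 9 + m i0)%N.

Lemma ewC m : ew lamC m = (uC m * 649 + tauC m)%N.
Proof.
rewrite /ew /uC /tauC !big_ord_recl big_ord0 /= ord4_1 ord4_2 ord4_3 ord4_0.
have -> : lamC i0 = nth 0%N [:: 2597; 2605; 0; 2028]%N 0 by [].
have -> : lamC i1 = nth 0%N [:: 2597; 2605; 0; 2028]%N 1 by [].
have -> : lamC i2 = nth 0%N [:: 2597; 2605; 0; 2028]%N 2 by [].
have -> : lamC i3 = nth 0%N [:: 2597; 2605; 0; 2028]%N 3 by [].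
rewrite /=; lia.
Qed.

Lemma tauC_lt m : mdeg m = 8%N -> (tauC m < 649)%N.
Proof. rewrite mdeg4 /tauC; lia. Qed.

Lemma injC m1 m2 : mdeg m1 = 8%N -> mdeg m2 = 8%N -> uC m1 = uC m2 -> tauC m1 = tauC m2 -> m1 = m2.
Proof.
rewrite !mdeg4 /uC /tauC => d1 d2 eu et.
have [e1 e2] := divmod_uniq (ltac:(lia) : (m1 i0 < 9)%N) (ltac:(lia) : (m2 i0 < 9)%N) et.
have [e3 e4] := divmod_uniq (ltac:(lia) : (m1 i1 < 9)%N) (ltac:(lia) : (m2 i1 < 9)%N) e1.
have e5 : m1 i2 = m2 i2 by lia.
rewrite (mnm4E m1) (mnm4E m2); congr mk; lia.
Qed.

Lemma FC m : m \in msupp (Fl R) -> (uC m <= 24)%N /\ (tauC m < 649)%N.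
Proof.
move/msupp_Fl; rewrite !inE => /orP[/eqP->|/orP[/eqP->|/orP[/eqP->|/orP[/eqP->|/eqP->]]]];
  by rewrite /uC /tauC ?mkE0 ?mkE1 ?mkE2 ?mkE3.
Qed.

Lemma facetC (G : {mpoly R[4]}) : G \is 8.-homog ->
  (forall x, 0 <= G.@[x] /\ G.@[x] <= (Fl R).@[x]) ->
  forall m, m \in msupp G -> (uC m <= 24)%N.
Proof. exact: (facet_gen ewC tauC_lt injC FC). Qed.
End Fac.


Lemma Fl_homog (R : realType) : Fl R \is 8.-homog.
Proof.
have hX : forall a b c d, (a + b + c + d = 8)%N -> ('X_[mk a b c d] : {mpoly R[4]}) \is 8.-homog.
  move=> a b c d h; apply/dhomogP => m; rewrite msuppX inE => /eqP ->.
  by rewrite -h; exact: (mdeg4 (mk a b c d)).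
rewrite /Fl; apply: rpredB; last apply: rpredZ.
  by rewrite !rpredD // hX.
by rewrite hX.
Qed.

Theorem proposition1 (R : realType) : extremal 8 (O41 R).
Proof.
have PF : in_P 8 (O41 R).
  split; first by rewrite /is_form O41E; exact: Fl_homog.
  by move=> x; rewrite O41E evalFl; exact: Fv_ge0.
split => // F1 F2 [h1 p1] [h2 p2] e.
have H : forall x, 0 <= F1.@[x] /\ F1.@[x] <= (Fl R).@[x].
  move=> x; split; first exact: p1.
  rewrite -O41E e mevalD; have := p2 x; lra.
have sub : {subset msupp F1 <= L}.
  move=> m hm; apply: inL; first by move/dhomogP: h1 => /(_ m hm).
  rewrite /facets; apply/and3P; split.
  - by have := facetA h1 H hm.
  - by have := facetB h1 H hm.
  - by have := facetC h1 H hm.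
have HP : forall a b c d : R,
  0 <= P (F1@_(mk 0 0 0 8)) (F1@_(mk 1 1 1 5)) (F1@_(mk 1 1 2 4)) (F1@_(mk 1 2 1 4))
  (F1@_(mk 2 1 1 4)) (F1@_(mk 2 2 2 2)) (F1@_(mk 2 2 3 1)) (F1@_(mk 2 2 4 0)) (F1@_(mk 2 3 2 1))
  (F1@_(mk 2 3 3 0)) (F1@_(mk 2 4 2 0)) (F1@_(mk 3 2 2 1)) (F1@_(mk 3 2 3 0)) (F1@_(mk 3 3 2 0))
  (F1@_(mk 4 2 2 0)) a b c d /\
  P (F1@_(mk 0 0 0 8)) (F1@_(mk 1 1 1 5)) (F1@_(mk 1 1 2 4)) (F1@_(mk 1 2 1 4))
  (F1@_(mk 2 1 1 4)) (F1@_(mk 2 2 2 2)) (F1@_(mk 2 2 3 1)) (F1@_(mk 2 2 4 0)) (F1@_(mk 2 3 2 1))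
  (F1@_(mk 2 3 3 0)) (F1@_(mk 2 4 2 0)) (F1@_(mk 3 2 2 1)) (F1@_(mk 3 2 3 0)) (F1@_(mk 3 3 2 0))
  (F1@_(mk 4 2 2 0)) a b c d <= Fv a b c d.
  move=> a b c d; have := H (pt a b c d); rewrite (evalG _ sub) evalFl.
  by [].
have [c0 c1] := HP 0 0 0 1.
have [E1 [E2 [E3 [E4 [E5 [E6 [E7 [E8 [E9 [E10 [E11 [E12 [E13 E14]]]]]]]]]]]]] := final HP.
set c := F1@_(mk 0 0 0 8) in c0 c1 E1 E2 E3 E4 E5 E6 E7 E8 E9 E10 E11 E12 E13 E14 HP.
have eP : P c (F1@_(mk 1 1 1 5)) (F1@_(mk 1 1 2 4)) (F1@_(mk 1 2 1 4))
  (F1@_(mk 2 1 1 4)) (F1@_(mk 2 2 2 2)) (F1@_(mk 2 2 3 1)) (F1@_(mk 2 2 4 0)) (F1@_(mk 2 3 2 1))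
  (F1@_(mk 2 3 3 0)) (F1@_(mk 2 4 2 0)) (F1@_(mk 3 2 2 1)) (F1@_(mk 3 2 3 0)) (F1@_(mk 3 3 2 0))
  (F1@_(mk 4 2 2 0)) 0 0 0 1 = c by rewrite /P; ring.
have eF : Fv 0 0 0 1 = 1 :> R by rewrite /Fv; ring.
rewrite eP in c0 c1; rewrite eF in c1.
have eF1 : F1 = c *: O41 R.
  rewrite O41E {1}(repr_seq L_uniq sub) /L !big_cons big_nil.
  rewrite E1 E2 E3 E4 E5 E6 E7 E8 E9 E10 E11 E12 E13 E14 -/c /Fl.
  rewrite -!mul_mpolyC !rmorphM /= !rmorphN /= !rmorph_nat rmorph0 /=.
  ring.
exists c, (1 - c); split => //; first lra.
have -> : F2 = O41 R - F1 by rewrite e; ring.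
by rewrite eF1 scalerBl scale1r.
Qed.
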